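(* Let $\mathbb{R}^n_s$ be $\mathbb{R}^n$ with a non-degenerate symmetric bilinear form of signature $(n-s,s)$, and let $G\subset\mathrm{Iso}(\mathbb{R}^n_s)\subset\mathrm{GL}_{n+1}(\mathbb{R})$ be a real Zariski-closed subgroup whose centralizer in $\mathrm{Iso}(\mathbb{R}^n_s)$ acts transitively on $\mathbb{R}^n$, with Lie algebra $\mathfrak{g}\subset\mathrm{Mat}_{n+1}(\mathbb{R})$. Then $G=I+\mathfrak{g}$ is an affine subspace of $\mathrm{Mat}_{n+1}(\mathbb{R})$; let $\nabla^G$ be the natural flat affine connection it inherits. Fix $p\in\mathbb{R}^n$, let $F_p=G.p$ (an affine subspace of $\mathbb{R}^n$), and let $\nabla$ be the pullback to $G$ of the natural flat affine connection of $F_p$ via the orbit map $\theta:G\to F_p$, $g\mapsto g.p$ (a diffeomorphism). Then $(G,\nabla^G)$ is affinely diffeomorphic to $(G,\nabla)$.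
   Context: Elements of $\mathrm{Iso}(\mathbb{R}^n_s)$ are affine maps $(I+A,v)$ identified with matrices $\begin{pmatrix}I+A&v\\0&1\end{pmatrix}$. *)

(* Defs.v *)
From HB Require Import structures.
From mathcomp Require Import all_boot all_order all_algebra.
From mathcomp Require Import all_classical all_reals.
From mathcomp Require Import topology normedtype derive.
Set Implicit Arguments. Unset Strict Implicit. Unset Printing Implicit Defensive.
Import Order.TTheory GRing.Theory Num.Theory.
Local Open Scope ring_scope.
Local Open Scope classical_set_scope.

Section Defs.
Variable R : realType.

Definition has_signature (n : nat) (B : 'M[R]_n) (p q : nat) : Prop :=
  (p + q)%N = n /\
  exists P : 'M[R]_n, P \in unitmx /\
    P^T *m B *m P = diag_mx (\row_(i < n) (if (i < p)%N then 1 else -1)).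

Definition Iso (n : nat) (B : 'M[R]_n) : set 'M[R]_(n + 1) :=
  [set M | exists (L : 'M[R]_n) (v : 'cV[R]_n),
     M = block_mx L v 0 1%:M /\ L^T *m B *m L = B].

Definition act (n : nat) (g : 'M[R]_(n + 1)) (p : 'cV[R]_n) : 'cV[R]_n :=
  usubmx (g *m col_mx p 1%:M).

Inductive polyfun (m : nat) : ('M[R]_m -> R) -> Prop :=
| pf_const (c : R) : polyfun (fun _ => c)
| pf_coord (i j : 'I_m) : polyfun (fun M => M i j)
| pf_add f g : polyfun f -> polyfun g -> polyfun (fun M => f M + g M)
| pf_mul f g : polyfun f -> polyfun g -> polyfun (fun M => f M * g M).

Definition zariski_closed (m : nat) (G : set 'M[R]_m) : Prop :=
  exists S : set ('M[R]_m -> R), (forall f, S f -> polyfun f) /\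
    forall M, G M <-> (forall f, S f -> f M = 0).

Definition is_subgroup (m : nat) (G : set 'M[R]_m) : Prop :=
  G 1%:M /\ (forall x y, G x -> G y -> G (x *m y)) /\
  (forall x, G x -> x \in unitmx /\ G (invmx x)).

Definition centralizer_in (m : nat) (H G : set 'M[R]_m) : set 'M[R]_m :=
  [set h | H h /\ forall g, G g -> h *m g = g *m h].

Definition lie_algebra (m : nat) (G : set 'M[R]_m) : set 'M[R]_m :=
  [set X | exists gamma : R -> 'M[R]_m,
     (forall t, G (gamma t)) /\ gamma 0 = 1%:M /\
     forall i j : 'I_m,
       derivable (fun t : R^o => (gamma t i j : R^o)) (0 : R^o) (1 : R^o) /\
       derive1 (fun t : R^o => (gamma t i j : R^o)) 0 = X i j].

Definition affine_set (V : lmodType R) (A : set V) : Prop :=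
  forall x y (t : R), A x -> A y -> A ((1 - t) *: x + t *: y).

(* f is affine on the affine subspace A (i.e. preserves affine combinations
   of points of A): this is compatibility with the natural flat connections *)
Definition affine_on (V W : lmodType R) (A : set V) (f : V -> W) : Prop :=
  forall x y (t : R), A x -> A y ->
    f ((1 - t) *: x + t *: y) = (1 - t) *: f x + t *: f y.

End Defs.

(* Main.v *)
Set Warnings "-all".
Set Implicit Arguments. Unset Strict Implicit.
Require Import Defs.
From HB Require Import structures.
From mathcomp Require Import all_boot all_order all_algebra.
From mathcomp Require Import all_classical all_reals.
From mathcomp Require Import topology normedtype derive.
From mathcomp Require Import ring lra.
Import numFieldNormedType.Exports.
Import Order.TTheory GRing.Theory Num.Theory.
Local Open Scope ring_scope.
Local Open Scope classical_set_scope.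
Lemma act_block (R : realType) n (L : 'M[R]_n) v q :
  act (block_mx L v 0 1%:M) q = L *m q + v.
Proof. by rewrite /act mul_block_col mul1mx mulmx1 col_mxKu. Qed.

Lemma act_mul (R : realType) n (M : 'M[R]_(n+1)) (L : 'M[R]_n) v q :
  act (M *m block_mx L v 0 1%:M) q = act M (act (block_mx L v 0 1%:M) q).
Proof.
rewrite act_block /act -mulmxA mul_block_col mul1mx mulmx1 mul0mx add0r.
by [].
Qed.

Lemma tr11 {R : realType} (M : 'M[R]_1) : M^T = M.
Proof. by apply/matrixP => i j; rewrite !ord1 mxE. Qed.

Lemma delta_entry (R : realType) n (M : 'M[R]_n) i j :
  ((delta_mx i 0 : 'cV[R]_n)^T *m M *m (delta_mx j 0 : 'cV[R]_n)) 0 0 = M i j.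
Proof. by rewrite trmx_delta -rowE -colE !mxE. Qed.

Lemma form_zero (R : realType) n (S : 'M[R]_n) :
  (forall x y : 'cV[R]_n, (x^T *m S *m y) 0 0 = 0) -> S = 0.
Proof. by move=> h; apply/matrixP => i j; rewrite -delta_entry h mxE. Qed.

Lemma vec_zero (R : realType) n (c : 'cV[R]_n) :
  (forall x : 'cV[R]_n, (x^T *m c) 0 0 = 0) -> c = 0.
Proof.
move=> h; apply/matrixP => i j; rewrite ord1 mxE.
have := h (delta_mx i 0); rewrite trmx_delta -rowE !mxE => <-.
by [].
Qed.

Lemma quad_zero (R : realType) n (S : 'M[R]_n) (c : 'cV[R]_n) :
  S^T = S ->
  (forall x : 'cV[R]_n, (x^T *m S *m x) 0 0 + 2 * (x^T *m c) 0 0 = 0) ->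
  S = 0 /\ c = 0.
Proof.
move=> hS h.
have hx : forall x : 'cV[R]_n, (x^T *m S *m x) 0 0 = 0 /\ (x^T *m c) 0 0 = 0.
  move=> x; have h1 := h x; have h2 := h (- x).
  have e : (- x)^T = - x^T by apply/matrixP => i j; rewrite !mxE.
  move: h2; rewrite e !mulNmx mulmxN opprK [X in 2 * X]mxE.
  move=> h2; split; lra.
split; last by apply: vec_zero => x; case: (hx x).
apply: form_zero => x y.
have hsym : (y^T *m S *m x) 0 0 = (x^T *m S *m y) 0 0.
  have := tr11 (y^T *m S *m x) => /(congr1 (fun M : 'M[R]_1 => M 0 0)) <-.
  by rewrite !trmx_mul trmxK hS mulmxA mxE.
have e : (x + y)^T = x^T + y^T by apply/matrixP => i j; rewrite !mxE.
have := (hx (x + y)).1; have := (hx x).1; have := (hx y).1; move: hsym.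
rewrite e !mulmxDl !mulmxDr !mxE.
by move=> *; lra.
Qed.

Lemma sqz_aux (R : realType) n (B : 'M[R]_n) (hB : B^T = B)
  (K : 'M[R]_n) (w : 'cV[R]_n)
  (hinv : forall x : 'cV[R]_n,
     (K *m x + w)^T *m B *m (K *m x + w) = w^T *m B *m w) :
  K^T *m B *m K = 0 /\ K^T *m B *m w = 0.
Proof.
apply: quad_zero.
  by rewrite !trmx_mul trmxK hB mulmxA.
move=> x; have := hinv x.
have e : (K *m x + w)^T = x^T *m K^T + w^T.
  by apply/matrixP => i j; rewrite !mxE; congr (_ + _); apply: eq_bigr => k _; rewrite !mxE mulrC.
have e2 : w^T *m B *m (K *m x) = x^T *m (K^T *m B *m w).
  rewrite -[LHS]tr11 !trmx_mul trmxK hB !mulmxA.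
  by [].
rewrite e !mulmxDl !mulmxDr e2 => /(congr1 (fun M : 'M[R]_1 => M 0 0)).
rewrite !mulmxA.
move: (x^T *m K^T *m B *m K *m x) (x^T *m K^T *m B *m w) (w^T *m B *m w) => a b c.
by rewrite !mxE => h; lra.
Qed.

Lemma sqz (R : realType) n (B : 'M[R]_n) (hB : B^T = B) (hdet : \det B != 0)
  (L : 'M[R]_n) (w : 'cV[R]_n) (hL : L^T *m B *m L = B)
  (hinv : forall x : 'cV[R]_n,
     ((L - 1%:M) *m x + w)^T *m B *m ((L - 1%:M) *m x + w) = w^T *m B *m w) :
  (L - 1%:M) *m (L - 1%:M) = 0 /\ (L - 1%:M) *m w = 0.
Proof.
have [hS hc] := @sqz_aux R n B hB _ _ hinv.
move: hS hc hL; have -> : L = (L - 1%:M) + 1%:M by rewrite subrK.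
rewrite addrK; move: (L - 1%:M) => K hS hc hL.
have eT : (K + 1%:M)^T = K^T + 1%:M.
  by apply/matrixP => i j; rewrite !mxE eq_sym.
move: hL; rewrite eT !mulmxDl !mulmxDr mul1mx mulmx1 hS add0r => hL.
have hKB : K^T *m B = - (B *m K).
  apply/eqP; rewrite -addr_eq0; apply/eqP.
  by move/(congr1 (fun M => M - B)): hL; rewrite subrr mulmx1 addrA addrK.
have hBu : B \in unitmx by rewrite unitmxE unitfE.
split.
  have : B *m (K *m K) = 0.
    by rewrite mulmxA -[B *m K]opprK -hKB mulNmx hS oppr0.
  by move/(congr1 (mulmx (invmx B))); rewrite mulKmx // mulmx0.
have : B *m (K *m w) = 0.
  by rewrite mulmxA -[B *m K]opprK -hKB mulNmx hc oppr0.
by move/(congr1 (mulmx (invmx B))); rewrite mulKmx // mulmx0.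
Qed.

Lemma block_sub1 (R : realType) n (L : 'M[R]_n) (w : 'cV[R]_n) :
  block_mx L w 0 1%:M - 1%:M = block_mx (L - 1%:M) w 0 0 :> 'M[R]_(n + 1).
Proof.
rewrite [X in _ - X](scalar_mx_block n 1) opp_block_mx add_block_mx.
by rewrite !oppr0 !addr0 subrr.
Qed.

Lemma N_sq (R : realType) n (B : 'M[R]_n) (hB : B^T = B) (hdet : \det B != 0)
  (G : set 'M[R]_(n + 1)) (hGiso : G `<=` Iso B)
  (htrans : forall p q : 'cV[R]_n,
      exists h, centralizer_in (Iso B) G h /\ act h p = q)
  g (Gg : G g) : (g - 1%:M) *m (g - 1%:M) = 0.
Proof.
have [L [w [eg hL]]] := hGiso g Gg.
have [hK hw] : (L - 1%:M) *m (L - 1%:M) = 0 /\ (L - 1%:M) *m w = 0.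
  apply: (@sqz R n B hB hdet L w hL) => x.
  have [h [[[Lh [vh [eh hLh]]] hcomm] hx]] := htrans 0 x.
  have ex : x = vh by rewrite -hx eh act_block mulmx0 add0r.
  have e1 : act g x = Lh *m w + vh.
    rewrite -hx {1}eh -act_mul -eh -hcomm // {1}eg act_mul -eg eh.
    by rewrite act_block eg act_block mulmx0 add0r.
  have e2 : (L - 1%:M) *m x + w = Lh *m w.
    move: e1; rewrite eg act_block => e1.
    by rewrite mulmxBl mul1mx addrAC e1 ex addrK.
  rewrite e2 trmx_mul !mulmxA.
  have -> : w^T *m Lh^T *m B *m Lh = w^T *m (Lh^T *m B *m Lh) by rewrite !mulmxA.
  by rewrite hLh.
rewrite eg block_sub1 mulmx_block hK hw !mulmx0 !mul0mx !addr0.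
by rewrite block_mx0.
Qed.

Lemma act_comm (R : realType) n (B : 'M[R]_n) (G : set 'M[R]_(n + 1))
  (hGiso : G `<=` Iso B) h x (hh : centralizer_in (Iso B) G h) (Gx : G x) q :
  act x (act h q) = act h (act x q).
Proof.
have [[Lh [vh [eh _]]] hcomm] := hh.
have [Lx [vx [ex _]]] := hGiso x Gx.
by rewrite {1}eh -act_mul -eh -hcomm // {1}ex act_mul -ex.
Qed.

Lemma orbit_inj (R : realType) n (B : 'M[R]_n) (G : set 'M[R]_(n + 1))
  (hGiso : G `<=` Iso B)
  (htrans : forall p q : 'cV[R]_n,
      exists h, centralizer_in (Iso B) G h /\ act h p = q) p :
  {in G &, injective (fun x => act x p)}.
Proof.
move=> x y /set_mem Gx /set_mem Gy /= exy.
have hq : forall q, act x q = act y q.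
  move=> q; have [h [hh <-]] := htrans p q.
  by rewrite (act_comm hGiso hh Gx) (act_comm hGiso hh Gy) exy.
have [Lx [vx [ex _]]] := hGiso x Gx.
have [Ly [vy [ey _]]] := hGiso y Gy.
have hv : vx = vy.
  by have := hq 0; rewrite ex ey !act_block !mulmx0 !add0r.
have hL : Lx = Ly.
  apply/matrixP => i j.
  have := congr1 (fun v : 'cV[R]_n => v i 0) (hq (delta_mx j 0)).
  by rewrite ex ey !act_block hv -!colE !mxE => /addIr.
by rewrite ex ey hv hL.
Qed.

Lemma poly_nat_roots (R : realType) (q : {poly R}) :
  (forall k : nat, q.[k%:R] = 0) -> q = 0.
Proof.
move=> h; apply/eqP; apply/negPn/negP => hq.
have hall : all (root q) [seq k%:R | k <- iota 0 (size q)].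
  by apply/allP => x /mapP [k _ ->]; rewrite /root h.
have hu : uniq [seq k%:R : R | k <- iota 0 (size q)].
  rewrite map_inj_uniq ?iota_uniq //.
  exact: (mulrIn (oner_neq0 R)).
have := max_poly_roots hq hall hu.
by rewrite size_map size_iota ltnn.
Qed.

Lemma polyfun_line (R : realType) m (f : 'M[R]_m -> R) (hf : polyfun f)
  (M0 N : 'M[R]_m) : exists q : {poly R}, forall t, q.[t] = f (M0 + t *: N).
Proof.
elim: hf.
- by move=> c; exists c%:P => t; rewrite hornerC.
- move=> i j; exists ((M0 i j)%:P + (N i j)%:P * 'X) => t.
  by rewrite hornerD hornerC hornerM hornerC hornerX !mxE mulrC.
- move=> f1 f2 _ [q1 h1] _ [q2 h2]; exists (q1 + q2) => t.
  by rewrite hornerD h1 h2.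
- move=> f1 f2 _ [q1 h1] _ [q2 h2]; exists (q1 * q2) => t.
  by rewrite hornerM h1 h2.
Qed.

Lemma pow_lin (R : realType) m (G : set 'M[R]_m) (hsub : is_subgroup G)
  N (hN : G (1%:M + N)) (hNN : N *m N = 0) (k : nat) :
  G (1%:M + k%:R *: N).
Proof.
have [h1 [hM _]] := hsub.
elim: k => [|k IH]; first by rewrite scale0r addr0.
have := hM _ _ IH hN.
rewrite mulmxDl !mulmxDr !mul1mx mulmx1 -scalemxAl hNN scaler0 addr0.
by rewrite -natr1 scalerDl scale1r addrA addrAC.
Qed.

Lemma scal_lin (R : realType) m (G : set 'M[R]_m) (hsub : is_subgroup G)
  (hzar : zariski_closed G)
  N (hN : G (1%:M + N)) (hNN : N *m N = 0) (t : R) :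
  G (1%:M + t *: N).
Proof.
have [S [hS hG]] := hzar.
apply/(hG _) => f Sf.
have [q hq] := polyfun_line (hS f Sf) 1%:M N.
rewrite -hq (poly_nat_roots (q := q)) ?horner0 // => k.
by rewrite hq; apply: ((hG _).1 (pow_lin hsub hN hNN k)) Sf.
Qed.

Lemma alg_add (R : realType) m (N M : 'M[R]_m)
  (hNN : N *m N = 0) (hMM : M *m M = 0)
  (e1 : (N + M + N *m M) *m (N + M + N *m M) = 0)
  (e2 : (- N + M + (- N) *m M) *m (- N + M + (- N) *m M) = 0) :
  (1%:M + 2^-1 *: N) *m (1%:M + M) *m (1%:M + 2^-1 *: N) = 1%:M + (N + M).
Proof.
have hNNX : forall X : 'M[R]_m, N *m (N *m X) = 0 by move=> X; rewrite mulmxA hNN mul0mx.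
have hMMX : forall X : 'M[R]_m, M *m (M *m X) = 0 by move=> X; rewrite mulmxA hMM mul0mx.
move: e1 e2.
rewrite !mulmxDl !mulmxDr -!mulmxA !mulNmx !mulmxN ?hNNX ?hMMX ?hNN ?hMM.
move=> e1 e2.
have [hX hY] : N *m M + M *m N + M *m (N *m M) = 0 /\
               N *m (M *m N) + N *m (M *m (N *m M)) = 0.
  move: e1 e2; rewrite !mulmx0.
  move: (N *m M) (M *m N) (M *m (N *m M)) (N *m (M *m N))
        (N *m (M *m (N *m M))) => a b c d e e1 e2.
  split; apply/matrixP => i j; move/matrixP/(_ i j): e1;
    move/matrixP/(_ i j): e2; rewrite !mxE => e2 e1; lra.
have hc : M *m (N *m M) = 0.
  have := congr1 (mulmx M) hX.
  by rewrite !mulmxDr !hMMX mulmx0 ?addr0 ?add0r.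
have hab : N *m M + M *m N = 0 by move: hX; rewrite hc addr0.
have hd : N *m (M *m N) = 0.
  have := congr1 (mulmx N) hab.
  by rewrite !mulmxDr !hNNX mulmx0 add0r.
rewrite !mul1mx !mulmx1 !mulmxDl !mul1mx -!scalemxAl -!scalemxAr -!mulmxA.
rewrite hNN hd !scaler0 !addr0.
move: hab; move: (N *m M) (M *m N) => a b hab.
apply/matrixP => i j; move/matrixP/(_ i j): hab; rewrite !mxE => hab.
lra.
Qed.


Lemma deriv_cvg (R : realType) (f : R^o -> R^o) (h : derivable f 0 1) :
  (t^-1 * (f t - f 0) : R) @[t --> (0:R)^'] --> (derive1 f 0 : R).
Proof.
rewrite derive1E.
move: h; rewrite /derivable /derive => h.
have e : (fun t : R => t^-1 * (f t - f 0)) = (fun h => h^-1 *: ((f \o shift 0) h%:A - f 0)).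
  by apply: funext => t /=; rewrite addr0 /GRing.scale /= mulr1.
rewrite e; exact: h.
Qed.

Lemma polyfun_cvg (R : realType) m (f : 'M[R]_m -> R) (hf : polyfun f)
  (U : R -> 'M[R]_m) (M : 'M[R]_m) :
  (forall i j, U t i j @[t --> (0:R)^'] --> M i j) ->
  f (U t) @[t --> (0:R)^'] --> f M.
Proof.
move=> hU; elim: hf.
- by move=> c; apply: cvg_cst.
- by move=> i j; apply: hU.
- by move=> f1 f2 _ h1 _ h2; apply: cvgD.
- by move=> f1 f2 _ h1 _ h2; apply: cvgM.
Qed.

Lemma lie_sub (R : realType) m (G : set 'M[R]_m) (hzar : zariski_closed G)
  (hsc : forall N (t : R), G (1%:M + N) -> G (1%:M + t *: N))
  X (hX : lie_algebra G X) : G (1%:M + X).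
Proof.
have [gamma [hg [g0 hd]]] := hX.
have [S [hS hG]] := hzar.
apply/(hG _) => f Sf.
pose U t := 1%:M + t^-1 *: (gamma t - 1%:M).
have hU : forall i j, U t i j @[t --> (0:R)^'] --> (1%:M + X) i j.
  move=> i j; have [hder hval] := hd i j.
  have := deriv_cvg hder; rewrite hval => hc.
  have -> : (fun t => U t i j) =
     (fun t => 1%:M i j + t^-1 * ((gamma t i j : R^o) - (gamma 0 i j : R^o))).
    by apply: funext => t; rewrite /U g0 !mxE.
  rewrite [X in _ --> X]mxE.
  by apply: cvgD => //; apply: cvg_cst.
have hlim := polyfun_cvg (hS f Sf) hU.
have h0 : (fun t => f (U t)) = (fun _ => 0).
  apply: funext => t; apply: ((hG _).1) Sf; rewrite /U.
  apply: hsc; by rewrite addrC subrK.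
move: hlim; rewrite h0 => hlim.
apply: (@norm_cvg_unique _ _ _ _ _ _ hlim); exact: cvg_cst.
Qed.

Lemma lie_sup (R : realType) m (G : set 'M[R]_m)
  (hsc : forall N (t : R), G (1%:M + N) -> G (1%:M + t *: N))
  X (hX : G (1%:M + X)) : lie_algebra G X.
Proof.
exists (fun t => 1%:M + t *: X); split; first by move=> t; apply: hsc.
split; first by rewrite scale0r addr0.
move=> i j.
have -> : (fun t : R^o => ((1%:M + t *: X) i j : R^o)) =
   (cst (1%:M i j : R^o) + (X i j) \*: (@id R^o)).
  by apply: funext => t; rewrite !mxE /= mulrC.
have H : is_derive (0 : R^o) (1 : R^o) (cst (1%:M i j : R^o) + (X i j) \*: (@id R^o))
   (0 + X i j *: (1 : R^o)).
  by apply: is_deriveD.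
case: H => H1 H2; split; first exact: H1.
by rewrite derive1E H2 add0r /GRing.scale /= mulr1.
Qed.

Lemma act_lin (R : realType) n (x y : 'M[R]_(n + 1)) (a b : R) p :
  act (a *: x + b *: y) p = a *: act x p + b *: act y p.
Proof.
rewrite /act mulmxDl -!scalemxAl.
move: (x *m col_mx p 1%:M) (y *m col_mx p 1%:M) => u v.
by apply/matrixP => i j; rewrite !mxE.
Qed.

Unset Implicit Arguments.
Set Strict Implicit.

Theorem corollary4p3 (R : realType) (n s : nat) (hs : (s <= n)%N)
  (B : 'M[R]_n) (hBsym : B^T = B) (hBnd : \det B != 0)
  (hsig : has_signature B (n - s) s)
  (G : set 'M[R]_(n + 1))
  (hGsub : is_subgroup G) (hGiso : G `<=` Iso B)
  (hGzar : zariski_closed G)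
  (htrans : forall p q : 'cV[R]_n,
      exists h, centralizer_in (Iso B) G h /\ act h p = q)
  (p : 'cV[R]_n) :
  let g := lie_algebra G in
  let Fp := (fun x => act x p) @` G in
  (* G = I + g, an affine subspace of Mat_{n+1}(R) *)
  G = [set 1%:M + X | X in g] /\ affine_set G /\
  (* F_p is an affine subspace of R^n and the orbit map is a bijection G -> F_p *)
  affine_set Fp /\ {in G &, injective (fun x => act x p)} /\
  (* (G, nabla^G) is affinely diffeomorphic to (G, nabla = theta^* nabla^{F_p}) *)
  exists phi : 'M[R]_(n + 1) -> 'M[R]_(n + 1),
    (forall x, G x -> G (phi x)) /\
    (forall y, G y -> exists2 x, G x & phi x = y) /\
    {in G &, injective phi} /\
    affine_on G phi /\
    affine_on G (fun x => act (phi x) p).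
Proof.
move=> g Fp.
have hsq : forall N, G (1%:M + N) -> N *m N = 0.
  move=> N hN; have := N_sq hBsym hBnd hGiso htrans hN.
  by rewrite addrC addKr.
have hsc : forall N (t : R), G (1%:M + N) -> G (1%:M + t *: N).
  by move=> N t hN; exact: (scal_lin hGsub hGzar hN (hsq N hN) t).
have [h1 [hmul hinv]] := hGsub.
have hadd : forall N M, G (1%:M + N) -> G (1%:M + M) -> G (1%:M + (N + M)).
  move=> N M hN hM.
  have hN' : G (1%:M + - N) by have := hsc N (-1) hN; rewrite scaleN1r.
  have emul : forall P Q : 'M[R]_(n + 1),
      (1%:M + P) *m (1%:M + Q) = 1%:M + (P + Q + P *m Q).
    move=> P Q; rewrite mulmxDl !mulmxDr !mul1mx mulmx1.
    move: (P *m Q) => PQ; apply/matrixP => i j; rewrite !mxE; lra.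
  have e1 := hsq _ (eq_ind _ G (hmul _ _ hN hM) _ (emul N M)).
  have e2 := hsq _ (eq_ind _ G (hmul _ _ hN' hM) _ (emul (- N) M)).
  have hh := hsc N (2^-1) hN.
  by rewrite -(alg_add (hsq N hN) (hsq M hM) e1 e2); exact: (hmul _ _ (hmul _ _ hh hM) hh).
have hx1 : forall x : 'M[R]_(n + 1), 1%:M + (x - 1%:M) = x.
  by move=> x; rewrite addrC subrK.
have hGaff : affine_set G.
  move=> x y t Gx Gy.
  have -> : (1 - t) *: x + t *: y =
            1%:M + ((1 - t) *: (x - 1%:M) + t *: (y - 1%:M)).
    by apply/matrixP => i j; rewrite !mxE; ring.
  by apply: hadd; apply: hsc; rewrite hx1.
split.
  apply/seteqP; split.
    move=> x Gx; exists (x - 1%:M); last exact: hx1.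
    by apply: lie_sup => //; rewrite hx1.
  by move=> _ [X hX <-]; exact: (lie_sub hGzar hsc hX).
split; first exact: hGaff.
split.
  move=> _ _ t [x Gx <-] [y Gy <-].
  by exists ((1 - t) *: x + t *: y); [exact: hGaff | rewrite act_lin].
split; first exact: (orbit_inj hGiso htrans).
exists id; split => //; split; first by move=> y Gy; exists y.
split; first by move=> x y _ _.
split; first by [].
by move=> x y t _ _; rewrite act_lin.
Qed.
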